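(* For every formula $\varphi$: $\emptyset\vdash_{\mathsf{iSLH}}\varphi$ if and only if the sequent $\Rightarrow\varphi$ (empty antecedent) is provable in $\mathsf{G4iSLt}$.
   Context: Formulas are built by the grammar $\varphi ::= p \mid \bot \mid \varphi\land\varphi \mid \varphi\lor\varphi \mid \varphi\to\varphi \mid \Box\varphi$, with $p$ ranging over a countably infinite set of propositional variables. For a multiset $\Gamma$, $\Box\Gamma=\{\Box\psi:\psi\in\Gamma\}$; a boxed formula is one of the form $\Box\psi$. The generalised Hilbert calculus $\mathsf{iSLH}$ derives expressions $\Gamma\vdash\varphi$ ($\Gamma$ a set of formulas) by the rules: (Ax) $\Gamma\vdash\varphi$ whenever $\varphi$ is an instance of an axiom; (El) $\Gamma\vdash\varphi$ whenever $\varphi\in\Gamma$; (Nec) from $\emptyset\vdash\varphi$ infer $\Gamma\vdash\Box\varphi$; (MP) from $\Gamma\vdash\varphi$ and $\Gamma\vdash\varphi\to\psi$ infer $\Gamma\vdash\psi$. The axioms are all instances of: $\varphi\to(\psi\to\varphi)$; $(\varphi\to(\psi\to\chi))\to((\varphi\to\psi)\to(\varphi\to\chi))$; $\varphi\to(\varphi\lor\psi)$; $\psi\to(\varphi\lor\psi)$; $(\varphi\to\chi)\to((\psi\to\chi)\to((\varphi\lor\psi)\to\chi))$; $(\varphi\land\psi)\to\varphi$; $(\varphi\land\psi)\to\psi$; $(\varphi\to\psi)\to((\varphi\to\chi)\to(\varphi\to(\psi\land\chi)))$; $\bot\to\varphi$; $\Box(\varphi\to\psi)\to(\Box\varphi\to\Box\psi)$;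 $(\Box\varphi\to\varphi)\to\varphi$. A sequent is $\Gamma\Rightarrow\chi$ with $\Gamma$ a finite multiset of formulas and $\chi$ a formula. The sequent calculus $\mathsf{G4iSLt}$ has the following rules, where $p$ is a propositional variable and $\Phi$ always denotes a multiset containing no boxed formula: (⊥L) $\bot,\Gamma\Rightarrow\chi$ (no premise); (IdP) $\Gamma,p\Rightarrow p$ (no premise); (∧L) from $\Gamma,\varphi,\psi\Rightarrow\chi$ infer $\Gamma,\varphi\land\psi\Rightarrow\chi$; (∧R) from $\Gamma\Rightarrow\varphi$ and $\Gamma\Rightarrow\psi$ infer $\Gamma\Rightarrow\varphi\land\psi$; (∨L) from $\Gamma,\varphi\Rightarrow\chi$ and $\Gamma,\psi\Rightarrow\chi$ infer $\Gamma,\varphi\lor\psi\Rightarrow\chi$; (∨R$_i$), $i\in\{1,2\}$: from $\Gamma\Rightarrow\varphi_i$ infer $\Gamma\Rightarrow\varphi_1\lor\varphi_2$; (p→L) from $\Gamma,p,\varphi\Rightarrow\chi$ infer $\Gamma,p,p\to\varphi\Rightarrow\chi$; (→R) from $\Gamma,\varphi\Rightarrow\psi$ infer $\Gamma\Rightarrow\varphi\to\psi$; (□→L) from $\Phi,\Gamma,\psi,\Box\varphi\Rightarrow\varphi$ and $\Phi,\Box\Gamma,\psi\Rightarrow\chi$ infer $\Phi,\Box\Gamma,\Box\varphi\to\psi\Rightarrow\chi$; (SLtR) from $\Phi,\Gamma,\Box\varphi\Rightarrow\varphi$ infer $\Phi,\Box\Gamma\Rightarrow\Box\varphi$; (∧→L)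 from $\Gamma,\varphi\to(\psi\to\chi)\Rightarrow\delta$ infer $\Gamma,(\varphi\land\psi)\to\chi\Rightarrow\delta$; (∨→L) from $\Gamma,\varphi\to\chi,\psi\to\chi\Rightarrow\delta$ infer $\Gamma,(\varphi\lor\psi)\to\chi\Rightarrow\delta$; (→→L) from $\Gamma,\psi\to\chi\Rightarrow\varphi\to\psi$ and $\Gamma,\chi\Rightarrow\delta$ infer $\Gamma,(\varphi\to\psi)\to\chi\Rightarrow\delta$. A proof of a sequent $S$ is a finite tree of sequents with root $S$ in which each interior node together with its children forms an instance of a rule (conclusion, premises) and each leaf is the conclusion of a premise-free rule; $S$ is provable if it has a proof. *)

(* Defs.v *)
From Stdlib Require Export List Permutation.
Export ListNotations.

Inductive form : Type :=
| Var : nat -> form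
| Bot : form
| And : form -> form -> form
| Or  : form -> form -> form
| Imp : form -> form -> form
| Box : form -> form.

Inductive is_axiom : form -> Prop :=
| A1 : forall p q, is_axiom (Imp p (Imp q p))
| A2 : forall p q r,
    is_axiom (Imp (Imp p (Imp q r)) (Imp (Imp p q) (Imp p r)))
| A3 : forall p q, is_axiom (Imp p (Or p q))
| A4 : forall p q, is_axiom (Imp q (Or p q))
| A5 : forall p q r,
    is_axiom (Imp (Imp p r) (Imp (Imp q r) (Imp (Or p q) r)))
| A6 : forall p q, is_axiom (Imp (And p q) p)
| A7 : forall p q, is_axiom (Imp (And p q) q)
| A8 : forall p q r,
    is_axiom (Imp (Imp p q) (Imp (Imp p r) (Imp p (And q r))))
| A9 : forall p, is_axiom (Imp Bot p)
| AK : forall p q, is_axiom (Imp (Box (Imp p q)) (Imp (Box p) (Box q)))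
| ASL : forall p, is_axiom (Imp (Imp (Box p) p) p).

Definition empty_set : form -> Prop := fun _ => False.

Inductive iSLH : (form -> Prop) -> form -> Prop :=
| H_Ax : forall (G : form -> Prop) p, is_axiom p -> iSLH G p
| H_El : forall (G : form -> Prop) p, G p -> iSLH G p
| H_Nec : forall (G : form -> Prop) p, iSLH empty_set p -> iSLH G (Box p)
| H_MP : forall (G : form -> Prop) p q,
    iSLH G p -> iSLH G (Imp p q) -> iSLH G q.

(* Sequent calculus G4iSLt.  A multiset antecedent is represented by a *)
(* list; every rule's conclusion is matched up to permutation, so that *)
(* lists related by Permutation denote the same multiset.              *)

Definition is_boxed (f : form) : Prop :=
  match f with Box _ => True | _ => False end.

Definition no_boxed (Phi : list form) : Prop :=
  forall f, In f Phi -> ~ is_boxed f.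

Inductive G4iSLt : list form -> form -> Prop :=
| BotL : forall G G' c,
    Permutation G' (Bot :: G) -> G4iSLt G' c
| IdP : forall G G' n,
    Permutation G' (Var n :: G) -> G4iSLt G' (Var n)
| AndL : forall G G' a b c,
    Permutation G' (And a b :: G) ->
    G4iSLt (a :: b :: G) c -> G4iSLt G' c
| AndR : forall G a b,
    G4iSLt G a -> G4iSLt G b -> G4iSLt G (And a b)
| OrL : forall G G' a b c,
    Permutation G' (Or a b :: G) ->
    G4iSLt (a :: G) c -> G4iSLt (b :: G) c -> G4iSLt G' c
| OrR1 : forall G a b, G4iSLt G a -> G4iSLt G (Or a b)
| OrR2 : forall G a b, G4iSLt G b -> G4iSLt G (Or a b)
| PImpL : forall G G' n a c,
    Permutation G' (Var n :: Imp (Var n) a :: G) ->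
    G4iSLt (Var n :: a :: G) c -> G4iSLt G' c
| ImpR : forall G a b, G4iSLt (a :: G) b -> G4iSLt G (Imp a b)
| BoxImpL : forall Phi G G' a b c,
    no_boxed Phi ->
    Permutation G' (Phi ++ map Box G ++ [Imp (Box a) b]) ->
    G4iSLt (Phi ++ G ++ [b; Box a]) a ->
    G4iSLt (Phi ++ map Box G ++ [b]) c ->
    G4iSLt G' c
| SLtR : forall Phi G G' a,
    no_boxed Phi ->
    Permutation G' (Phi ++ map Box G) ->
    G4iSLt (Phi ++ G ++ [Box a]) a ->
    G4iSLt G' (Box a)
| AndImpL : forall G G' a b c d,
    Permutation G' (Imp (And a b) c :: G) ->
    G4iSLt (Imp a (Imp b c) :: G) d -> G4iSLt G' d
| OrImpL : forall G G' a b c d,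
    Permutation G' (Imp (Or a b) c :: G) ->
    G4iSLt (Imp a c :: Imp b c :: G) d -> G4iSLt G' d
| ImpImpL : forall G G' a b c d,
    Permutation G' (Imp (Imp a b) c :: G) ->
    G4iSLt (Imp b c :: G) (Imp a b) ->
    G4iSLt (c :: G) d -> G4iSLt G' d.

(* Main.v *)
Require Import Defs.
From Stdlib Require Import Classical Lia Arith.

Definition ctx (l : list form) : form -> Prop := fun x => In x l.

Lemma H_mono : forall G p, iSLH G p -> forall G', (forall x, G x -> G' x) -> iSLH G' p.
Proof. induction 1; intros G' HG.
- apply H_Ax; auto. - apply H_El; auto. - apply H_Nec; auto. - eapply H_MP; eauto. Qed.

Lemma H_subst : forall G p, iSLH G p -> forall G', (forall x, G x -> iSLH G' x) -> iSLH G' p.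
Proof. induction 1; intros G' HG.
- apply H_Ax; auto. - auto. - apply H_Nec; auto. - eapply H_MP; eauto. Qed.

Lemma H_id : forall G A, iSLH G (Imp A A).
Proof. intros. apply H_MP with (p := Imp A (Imp A A)). apply H_Ax, A1.
 apply H_MP with (p := Imp A (Imp (Imp A A) A)). apply H_Ax, A1. apply H_Ax, A2. Qed.

Lemma DT : forall G' p, iSLH G' p -> forall A G, (forall x, G' x -> x = A \/ G x) -> iSLH G (Imp A p).
Proof. induction 1; intros A G0 HG.
- apply H_MP with (p := p). apply H_Ax; auto. apply H_Ax, A1.
- destruct (HG p H) as [->|H1]. apply H_id.
  apply H_MP with (p := p). apply H_El; auto. apply H_Ax, A1.
- apply H_MP with (p := Box p). apply H_Nec; auto. apply H_Ax, A1.
- apply H_MP with (p := Imp A p). apply IHiSLH1; auto.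
  apply H_MP with (p := Imp A (Imp p q)). apply IHiSLH2; auto. apply H_Ax, A2.
Qed.

Lemma H_K : forall G a b, iSLH G (Box (Imp a b)) -> iSLH G (Box a) -> iSLH G (Box b).
Proof. intros. apply H_MP with (p := Box a); auto.
 apply H_MP with (p := Box (Imp a b)); auto. apply H_Ax, AK. Qed.

Lemma H_andI : forall G a b, iSLH G a -> iSLH G b -> iSLH G (And a b).
Proof. intros G a b Ha Hb.
 assert (HT : iSLH G (Imp Bot Bot)) by (apply H_Ax, A9).
 apply H_MP with (p := Imp Bot Bot); auto.
 apply H_MP with (p := Imp (Imp Bot Bot) b).
 apply H_MP with (p := b); auto. apply H_Ax, A1.
 apply H_MP with (p := Imp (Imp Bot Bot) a).
 apply H_MP with (p := a); auto. apply H_Ax, A1.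
 apply H_Ax, A8. Qed.

Lemma H_andE1 : forall G a b, iSLH G (And a b) -> iSLH G a.
Proof. intros. eapply H_MP; eauto. apply H_Ax, A6. Qed.
Lemma H_andE2 : forall G a b, iSLH G (And a b) -> iSLH G b.
Proof. intros. eapply H_MP; eauto. apply H_Ax, A7. Qed.

Lemma H_CP : forall G phi, iSLH G (Imp phi (Box phi)).
Proof. intros G phi.
 apply DT with (G' := fun x => x = phi \/ G x); [|auto].
 set (th := And phi (Box phi)).
 apply H_andE2 with (a := phi). fold th.
 apply H_MP with (p := Imp (Box th) th); [|apply H_Ax, ASL].
 apply DT with (G' := fun x => x = Box th \/ (x = phi \/ G x)); [|auto].
 apply H_andI. apply H_El; auto.
 apply H_K with (a := th). apply H_Nec. apply H_Ax, A6. apply H_El; auto.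
Qed.

Lemma box_ctx : forall D x, iSLH (ctx D) x -> iSLH (ctx (map Box D)) (Box x).
Proof. induction D as [|y D IH]; intros x H.
- apply H_Nec. eapply H_mono; [exact H|]. intros z Hz; inversion Hz.
- assert (H1 : iSLH (ctx D) (Imp y x)).
  { apply DT with (G' := ctx (y :: D)); auto. intros z Hz; destruct Hz; auto. }
  apply IH in H1. apply H_K with (a := y).
  eapply H_mono; eauto. intros z Hz; right; auto.
  apply H_El. left; auto.
Qed.

Lemma pin : forall (G' L : list form) x, Permutation G' L -> In x L -> ctx G' x.
Proof. intros. unfold ctx. eapply Permutation_in; [apply Permutation_sym|]; eauto. Qed.

Ltac el := apply H_El; unfold ctx in *; simpl in *; auto.

Lemma G4_sound : forall G c, G4iSLt G c -> iSLH (ctx G) c.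
Proof.
 induction 1.
- apply H_MP with (p := Bot). apply H_El. eapply pin; eauto. left; auto. apply H_Ax, A9.
- apply H_El. eapply pin; eauto. left; auto.
- apply (H_subst _ _ IHG4iSLt). intros x [Hx|[Hx|Hx]]; subst.
  + apply H_andE1 with (b := b). apply H_El. eapply pin; eauto. left; auto.
  + apply H_andE2 with (a := a). apply H_El. eapply pin; eauto. left; auto.
  + apply H_El. eapply pin; eauto. right; auto.
- apply H_andI; auto.
- apply H_MP with (p := Or a b). apply H_El. eapply pin; eauto. left; auto.
  apply H_MP with (p := Imp b c).
  { apply H_mono with (G := ctx G). apply DT with (G' := ctx (b :: G)); auto.
    intros z Hz; destruct Hz; auto. intros z Hz. eapply pin; eauto. right; auto. }
  apply H_MP with (p := Imp a c).
  { apply H_mono with (G := ctx G). apply DT with (G' := ctx (a :: G)); auto.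
    intros z Hz; destruct Hz; auto. intros z Hz. eapply pin; eauto. right; auto. }
  apply H_Ax, A5.
- apply H_MP with (p := a); auto. apply H_Ax, A3.
- apply H_MP with (p := b); auto. apply H_Ax, A4.
- apply (H_subst _ _ IHG4iSLt). intros x [Hx|[Hx|Hx]]; subst.
  + apply H_El. eapply pin; eauto. left; auto.
  + apply H_MP with (p := Var n). apply H_El. eapply pin; eauto. left; auto.
    apply H_El. eapply pin; eauto. right; left; auto.
  + apply H_El. eapply pin; eauto. right; right; auto.
- apply DT with (G' := ctx (a :: G)); auto. intros z Hz; destruct Hz; auto.
- assert (Hbox : iSLH (ctx G') (Box a)).
  { apply H_MP with (p := Imp (Box (Box a)) (Box a)); [|apply H_Ax, ASL].
    apply DT with (G' := fun x => x = Box (Box a) \/ ctx G' x); [|auto].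
    apply box_ctx in IHG4iSLt1. apply (H_subst _ _ IHG4iSLt1).
    intros x Hx. unfold ctx in Hx. apply in_map_iff in Hx. destruct Hx as [y [<- Hy]].
    apply in_app_iff in Hy. destruct Hy as [Hy|Hy].
    - apply H_MP with (p := y). apply H_El. right. eapply pin; eauto. apply in_app_iff; auto.
      apply H_CP.
    - apply in_app_iff in Hy. destruct Hy as [Hy|[Hy|[Hy|Hy]]].
      + apply H_El. right. eapply pin; eauto. apply in_app_iff; right. apply in_app_iff; left.
        apply in_map; auto.
      + subst y. apply H_K with (a := Box a).
        apply H_MP with (p := Imp (Box a) b). apply H_El. right. eapply pin; eauto.
        apply in_app_iff; right. apply in_app_iff; right. left; auto. apply H_CP.
        apply H_El; auto.
      + subst y. apply H_El; auto.
      + destruct Hy. }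
  assert (Hb : iSLH (ctx G') b).
  { apply H_MP with (p := Box a); auto. apply H_El. eapply pin; eauto.
    apply in_app_iff; right. apply in_app_iff; right. left; auto. }
  apply (H_subst _ _ IHG4iSLt2). intros x Hx. unfold ctx in Hx.
  apply in_app_iff in Hx. destruct Hx as [Hx|Hx].
  apply H_El. eapply pin; eauto. apply in_app_iff; auto.
  apply in_app_iff in Hx. destruct Hx as [Hx|[Hx|Hx]].
  apply H_El. eapply pin; eauto. apply in_app_iff; right. apply in_app_iff; auto.
  subst; auto. destruct Hx.
- apply H_MP with (p := Imp (Box (Box a)) (Box a)); [|apply H_Ax, ASL].
  apply DT with (G' := fun x => x = Box (Box a) \/ ctx G' x); [|auto].
  apply box_ctx in IHG4iSLt. apply (H_subst _ _ IHG4iSLt).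
  intros x Hx. unfold ctx in Hx. apply in_map_iff in Hx. destruct Hx as [y [<- Hy]].
  apply in_app_iff in Hy. destruct Hy as [Hy|Hy].
  + apply H_MP with (p := y). apply H_El. right. eapply pin; eauto. apply in_app_iff; auto.
    apply H_CP.
  + apply in_app_iff in Hy. destruct Hy as [Hy|[Hy|Hy]].
    * apply H_El. right. eapply pin; eauto. apply in_app_iff; right. apply in_map; auto.
    * subst y. apply H_El; auto.
    * destruct Hy.
- apply (H_subst _ _ IHG4iSLt). intros x [Hx|Hx]; subst.
  + apply DT with (G' := fun x => x = a \/ ctx G' x); [|auto].
    apply DT with (G' := fun x => x = b \/ (x = a \/ ctx G' x)); [|auto].
    apply H_MP with (p := And a b). apply H_andI; apply H_El; auto.
    apply H_El. right; right. eapply pin; eauto. left; auto.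
  + apply H_El. eapply pin; eauto. right; auto.
- apply (H_subst _ _ IHG4iSLt). intros x [Hx|[Hx|Hx]]; subst.
  + apply DT with (G' := fun x => x = a \/ ctx G' x); [|auto].
    apply H_MP with (p := Or a b). apply H_MP with (p := a). apply H_El; auto. apply H_Ax, A3.
    apply H_El. right. eapply pin; eauto. left; auto.
  + apply DT with (G' := fun x => x = b \/ ctx G' x); [|auto].
    apply H_MP with (p := Or a b). apply H_MP with (p := b). apply H_El; auto. apply H_Ax, A4.
    apply H_El. right. eapply pin; eauto. left; auto.
  + apply H_El. eapply pin; eauto. right; auto.
- assert (Hbc : iSLH (ctx G') (Imp b c)).
  { apply DT with (G' := fun x => x = b \/ ctx G' x); [|auto].
    apply H_MP with (p := Imp a b). apply H_MP with (p := b). apply H_El; auto. apply H_Ax, A1.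
    apply H_El. right. eapply pin; eauto. left; auto. }
  assert (Hab : iSLH (ctx G') (Imp a b)).
  { apply (H_subst _ _ IHG4iSLt1). intros x [Hx|Hx]; subst; auto.
    apply H_El. eapply pin; eauto. right; auto. }
  assert (Hc : iSLH (ctx G') c).
  { apply H_MP with (p := Imp a b); auto. apply H_El. eapply pin; eauto. left; auto. }
  apply (H_subst _ _ IHG4iSLt2). intros x [Hx|Hx]; subst; auto.
  apply H_El. eapply pin; eauto. right; auto.
Qed.

Inductive tree : Type := Node : list nat -> list (bool * tree) -> tree.
Definition atoms (t : tree) := match t with Node l _ => l end.
Definition kids (t : tree) := match t with Node _ k => k end.
Definition child (t c : tree) := exists b, In (b, c) (kids t).

Inductive desc : tree -> tree -> Prop :=
| d_refl : forall t, desc t t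
| d_step : forall t c u, child t c -> desc c u -> desc t u.

Inductive Rel : tree -> tree -> Prop :=
| Rmod : forall t c u, In (true, c) (kids t) -> desc c u -> Rel t u
| Rin : forall t b c u, In (b, c) (kids t) -> Rel c u -> Rel t u.

Fixpoint force (t : tree) (A : form) {struct A} : Prop :=
  match A with
  | Var n => In n (atoms t)
  | Bot => False
  | And a b => force t a /\ force t b
  | Or a b => force t a \/ force t b
  | Imp a b => forall u, desc t u -> force u a -> force u b
  | Box a => forall u, Rel t u -> force u a
  end.

Definition Mono (t : tree) := forall u c, desc t u -> child u c ->
  forall n, In n (atoms u) -> In n (atoms c).

Fixpoint height (t : tree) : nat :=
  match t with Node _ ks =>
    S ((fix hl (ks : list (bool * tree)) : nat :=
         match ks with [] => 0 | (_, c) :: r => Nat.max (height c) (hl r) end) ks)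
  end.

Lemma height_child : forall t c, child t c -> height c < height t.
Proof. intros [l ks] c [b H]. simpl in *. induction ks as [|[b' c'] r IH]; simpl in *.
 destruct H. destruct H as [H|H]. inversion H; subst. lia. specialize (IH H). lia. Qed.

Lemma desc_height : forall t u, desc t u -> height u <= height t.
Proof. induction 1; auto. apply height_child in H. lia. Qed.

Lemma desc_trans : forall t u v, desc t u -> desc u v -> desc t v.
Proof. induction 1; intros; auto. eapply d_step; eauto. Qed.

Lemma Rel_desc : forall t u, Rel t u -> exists c, child t c /\ desc c u.
Proof. induction 1. exists c; split; auto. exists true; auto.
 destruct IHRel as [c' [H1 H2]]. exists c; split. exists b; auto.
 eapply d_step; eauto. Qed.

Lemma Rel_height : forall t u, Rel t u -> height u < height t.
Proof. intros. apply Rel_desc in H. destruct H as [c [H1 H2]].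
 apply height_child in H1. apply desc_height in H2. lia. Qed.

Lemma Rel_desc' : forall t u, Rel t u -> desc t u.
Proof. intros. apply Rel_desc in H. destruct H as [c [H1 H2]]. eapply d_step; eauto. Qed.

Lemma desc_Rel : forall t u v, desc t u -> Rel u v -> Rel t v.
Proof. induction 1; intros; auto. destruct H as [b Hb]. eapply Rin; eauto. Qed.

Lemma Mono_desc : forall t u, Mono t -> desc t u -> Mono u.
Proof. unfold Mono; intros t u H Hd u0 c H1 H2. apply (H u0 c); auto. eapply desc_trans; eauto. Qed.

Lemma atoms_desc : forall t u, Mono t -> desc t u -> forall n, In n (atoms t) -> In n (atoms u).
Proof. induction 2; intros; auto. apply IHdesc. eapply Mono_desc; eauto. eapply d_step; eauto. constructor.
 eapply H; eauto. constructor. Qed.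

Lemma persist : forall A t u, Mono t -> desc t u -> force t A -> force u A.
Proof. induction A; simpl; intros t u Hm Hd H; auto.
- eapply atoms_desc; eauto.
- destruct H; split; eauto.
- destruct H; [left|right]; eauto.
- intros v Hv. apply H. eapply desc_trans; eauto.
- intros v Hv. apply H. eapply desc_Rel; eauto.
Qed.

Lemma force_CP : forall A t, Mono t -> force t A -> force t (Box A).
Proof. simpl; intros. eapply persist; eauto. apply Rel_desc'; auto. Qed.

Definition valid (A : form) := forall t, Mono t -> force t A.

Lemma SL_sound : forall p t, Mono t -> force t (Imp (Imp (Box p) p) p).
Proof.
 intros p t0 Ht0.
 assert (Hm : forall n t, height t < n -> Mono t -> force t (Imp (Box p) p) -> force t p).
 { induction n; intros t Ht Hm H. lia.
   simpl in H. apply H. constructor. simpl. intros u Hu. apply IHn.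
   apply Rel_height in Hu; lia. eapply Mono_desc; eauto. apply Rel_desc'; auto.
   eapply persist with (A := Imp (Box p) p); eauto. apply Rel_desc'; auto. }
 simpl. intros u Hu H. apply (Hm (S (height u))); auto. eapply Mono_desc; eauto.
Qed.

Lemma ax_sound : forall p, is_axiom p -> valid p.
Proof. intros p Hp t Ht. destruct Hp; simpl.
- intros u Hu Hp v Hv Hq. apply (persist p u v); auto. eapply Mono_desc; eauto.
- intros u Hu H1 v Hv H2 w Hw Hp.
  assert (Hmu : Mono u) by (eapply Mono_desc; eauto).
  assert (Hmv : Mono v) by (eapply Mono_desc; eauto).
  assert (Hq : force w q) by (apply H2; auto).
  apply (H1 w (desc_trans _ _ _ Hv Hw) Hp w (d_refl _) Hq).
- intros; auto.
- intros; auto.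
- intros u Hu H1 v Hv H2 w Hw [H3|H3].
  apply H1; auto. eapply desc_trans; eauto. apply H2; auto.
- intros u Hu [H1 H2]; auto.
- intros u Hu [H1 H2]; auto.
- intros u Hu H1 v Hv H2 w Hw H3. split. apply H1; auto. eapply desc_trans; eauto. apply H2; auto.
- intros u Hu [].
- intros u Hu H1 v Hv H2 w Hw. apply (H1 w). eapply desc_Rel; eauto. constructor. auto.
- apply SL_sound; auto.
Qed.

Lemma H_sound : forall G p, iSLH G p -> (forall x, G x -> valid x) -> valid p.
Proof. induction 1; intros HG.
- apply ax_sound; auto.
- auto.
- intros t Ht. simpl. intros u Hu. apply IHiSLH. intros x []. eapply Mono_desc; eauto.
  apply Rel_desc'; auto.
- intros t Ht. specialize (IHiSLH1 HG t Ht). specialize (IHiSLH2 HG t Ht).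
  simpl in IHiSLH2. apply IHiSLH2; auto. constructor.
Qed.

Fixpoint wt (A : form) : nat :=
  match A with
  | Var _ => 1 | Bot => 1
  | And a b => wt a + wt b + 2
  | Or a b => wt a + wt b + 1
  | Imp a b => wt a + wt b + 1
  | Box a => wt a + 1
  end.

Fixpoint sumw (l : list form) : nat :=
  match l with [] => 0 | A :: r => 4 ^ wt A + sumw r end.

Lemma sumw_app : forall l1 l2, sumw (l1 ++ l2) = sumw l1 + sumw l2.
Proof. induction l1; simpl; intros; auto. rewrite IHl1; lia. Qed.

Lemma sumw_perm : forall l l', Permutation l l' -> sumw l = sumw l'.
Proof. induction 1; simpl; lia. Qed.

Definition mu (G : list form) (c : form) := sumw G + 4 ^ (S (wt c)).

Lemma wt_pos : forall A, 1 <= wt A.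
Proof. destruct A; simpl; lia. Qed.

Lemma pow_le : forall m W, m <= W -> 4 ^ m <= 4 ^ W.
Proof. intros. apply Nat.pow_le_mono_r; lia. Qed.

Lemma pow_lt3 : forall m n k W, m < W -> n < W -> k < W -> 4 ^ m + 4 ^ n + 4 ^ k < 4 ^ W.
Proof. intros. destruct W. lia.
 assert (4 ^ S W = 4 * 4 ^ W) by (simpl; lia).
 pose proof (pow_le m W). pose proof (pow_le n W). pose proof (pow_le k W).
 pose proof (Nat.pow_nonzero 4 W). lia. Qed.

Lemma pow_lt2 : forall m n W, m < W -> n < W -> 4 ^ m + 4 ^ n < 4 ^ W.
Proof. intros. pose proof (pow_lt3 m n m W). lia. Qed.

Lemma pow_lt1 : forall m W, m < W -> 4 ^ m < 4 ^ W.
Proof. intros. pose proof (pow_lt3 m m m W). lia. Qed.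

Fixpoint nb (l : list form) : list form :=
  match l with [] => [] | Box _ :: r => nb r | A :: r => A :: nb r end.
Fixpoint ub (l : list form) : list form :=
  match l with [] => [] | Box a :: r => a :: ub r | _ :: r => ub r end.

Lemma nb_perm : forall l, Permutation l (nb l ++ map Box (ub l)).
Proof. induction l as [|a l IH]; simpl; auto. destruct a; simpl; auto.
 eapply Permutation_trans. apply perm_skip, IH. apply Permutation_middle. Qed.

Lemma nb_no_boxed : forall l, no_boxed (nb l).
Proof. unfold no_boxed. induction l as [|a l IH]; simpl; intros f Hf; auto.
 destruct a; simpl in Hf; try (destruct Hf as [<-|Hf]; [simpl; auto|auto]); auto. Qed.

Lemma in_nb : forall l X, In X l -> ~ is_boxed X -> In X (nb l).
Proof. induction l as [|a l IH]; simpl; intros X H1 H2; auto.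
 destruct H1 as [H1|H1]. subst a. destruct X; simpl; auto. destruct H2; simpl; auto.
 destruct a; simpl; auto. Qed.

Lemma in_ub : forall l a, In (Box a) l -> In a (ub l).
Proof. induction l as [|x l IH]; simpl; intros a H; auto.
 destruct H as [H|H]. subst x. simpl; auto. destruct x; simpl; auto. Qed.

Lemma sumw_box : forall l, sumw l <= sumw (map Box l).
Proof. induction l; simpl; auto. pose proof (pow_le (wt a) (wt a + 1)). lia. Qed.

Lemma sumw_split : forall l, sumw l = sumw (nb l) + sumw (map Box (ub l)).
Proof. intros. rewrite (sumw_perm _ _ (nb_perm l)) at 1. apply sumw_app. Qed.

Lemma in_perm : forall (x : form) l, In x l -> exists l0, Permutation l (x :: l0).
Proof. intros. apply in_split in H. destruct H as [l1 [l2 ->]]. exists (l1 ++ l2).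
 apply Permutation_sym, Permutation_middle. Qed.

Fixpoint vars (l : list form) : list nat :=
  match l with [] => [] | Var n :: r => n :: vars r | _ :: r => vars r end.

Lemma vars_iff : forall l n, In n (vars l) <-> In (Var n) l.
Proof. induction l as [|a l IH]; simpl; intros; [tauto|].
 destruct a; simpl; rewrite ?IH; split; intros H; intuition (try congruence). Qed.

Definition cm (G : list form) (c : form) :=
  exists t, Mono t /\ (forall A, In A G -> force t A) /\ ~ force t c.
Definition Gl (G : list form) (c : form) := G4iSLt G c \/ cm G c.
Definition IHm (G : list form) (c : form) :=
  forall G' c', mu G' c' < mu G c -> Gl G' c'.

Lemma L_bot : forall G c, In Bot G -> G4iSLt G c.
Proof. intros. destruct (in_perm _ _ H) as [G0 HP]. eapply BotL; eauto. Qed.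

Lemma L_and : forall G c a b, In (And a b) G -> IHm G c -> Gl G c.
Proof. intros G c a b HX IH. destruct (in_perm _ _ HX) as [G0 HP].
 destruct (IH (a :: b :: G0) c) as [H|[t [Hm [Hf Hn]]]].
 - unfold mu. rewrite (sumw_perm _ _ HP). cbn [sumw wt].
   pose proof (pow_lt2 (wt a) (wt b) (wt a + wt b + 2)). lia.
 - left. eapply AndL; eauto.
 - right. exists t. split; auto. split; auto. intros A HA.
   apply (Permutation_in _ HP) in HA. destruct HA as [<-|HA]; simpl; auto.
   split; apply Hf; simpl; auto. apply Hf; simpl; auto.
Qed.

Lemma L_or : forall G c a b, In (Or a b) G -> IHm G c -> Gl G c.
Proof. intros G c a b HX IH. destruct (in_perm _ _ HX) as [G0 HP].
 destruct (IH (a :: G0) c) as [H1|[t [Hm [Hf Hn]]]].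
 - unfold mu. rewrite (sumw_perm _ _ HP). cbn [sumw wt].
   pose proof (pow_lt1 (wt a) (wt a + wt b + 1)). lia.
 - destruct (IH (b :: G0) c) as [H2|[t [Hm [Hf Hn]]]].
   + unfold mu. rewrite (sumw_perm _ _ HP). cbn [sumw wt].
     pose proof (pow_lt1 (wt b) (wt a + wt b + 1)). lia.
   + left. eapply OrL; eauto.
   + right. exists t. split; auto. split; auto. intros A HA.
     apply (Permutation_in _ HP) in HA. destruct HA as [<-|HA]; simpl; auto.
     right; apply Hf; simpl; auto. apply Hf; simpl; auto.
 - right. exists t. split; auto. split; auto. intros A HA.
   apply (Permutation_in _ HP) in HA. destruct HA as [<-|HA]; simpl; auto.
   left; apply Hf; simpl; auto. apply Hf; simpl; auto.
Qed.

Lemma L_pimp : forall G c n a, In (Var n) G -> In (Imp (Var n) a) G -> IHm G c -> Gl G c.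
Proof. intros G c n a Hv HX IH. destruct (in_perm _ _ HX) as [G1 HP1].
 assert (Hv1 : In (Var n) G1).
 { apply (Permutation_in _ HP1) in Hv. destruct Hv; auto. discriminate. }
 destruct (in_perm _ _ Hv1) as [G0 HP0].
 assert (HP : Permutation G (Var n :: Imp (Var n) a :: G0)).
 { eapply Permutation_trans. apply HP1. eapply Permutation_trans. apply perm_skip, HP0.
   apply perm_swap. }
 destruct (IH (Var n :: a :: G0) c) as [H|[t [Hm [Hf Hn]]]].
 - unfold mu. rewrite (sumw_perm _ _ HP). cbn [sumw wt].
   pose proof (pow_lt1 (wt a) (1 + wt a + 1)). lia.
 - left. eapply PImpL; eauto.
 - right. exists t. split; auto. split; auto. intros A HA.
   apply (Permutation_in _ HP) in HA. destruct HA as [<-|[<-|HA]].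
   apply Hf; simpl; auto.
   simpl. intros u Hu _. apply (persist a t u); auto. apply Hf; simpl; auto.
   apply Hf; simpl; auto.
Qed.

Lemma L_andimp : forall G c a b d, In (Imp (And a b) d) G -> IHm G c -> Gl G c.
Proof. intros G c a b d HX IH. destruct (in_perm _ _ HX) as [G0 HP].
 destruct (IH (Imp a (Imp b d) :: G0) c) as [H|[t [Hm [Hf Hn]]]].
 - unfold mu. rewrite (sumw_perm _ _ HP). cbn [sumw wt].
   pose proof (pow_lt1 (wt a + (wt b + wt d + 1) + 1) (wt a + wt b + 2 + wt d + 1)). lia.
 - left. eapply AndImpL; eauto.
 - right. exists t. split; auto. split; auto. intros A HA.
   apply (Permutation_in _ HP) in HA. destruct HA as [<-|HA].
   + simpl. intros u Hu [Ha Hb]. assert (H1 := Hf _ (or_introl eq_refl)). simpl in H1.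
     apply (H1 u Hu Ha u (d_refl u) Hb).
   + apply Hf; simpl; auto.
Qed.

Lemma L_orimp : forall G c a b d, In (Imp (Or a b) d) G -> IHm G c -> Gl G c.
Proof. intros G c a b d HX IH. destruct (in_perm _ _ HX) as [G0 HP].
 destruct (IH (Imp a d :: Imp b d :: G0) c) as [H|[t [Hm [Hf Hn]]]].
 - unfold mu. rewrite (sumw_perm _ _ HP). cbn [sumw wt].
   pose proof (pow_lt2 (wt a + wt d + 1) (wt b + wt d + 1) (wt a + wt b + 1 + wt d + 1)). lia.
 - left. eapply OrImpL; eauto.
 - right. exists t. split; auto. split; auto. intros A HA.
   apply (Permutation_in _ HP) in HA. destruct HA as [<-|HA].
   + simpl. intros u Hu [Ha|Hb].
     assert (H1 := Hf _ (or_introl eq_refl)). simpl in H1. apply (H1 u Hu Ha).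
     assert (H1 := Hf _ (or_intror (or_introl eq_refl))). simpl in H1. apply (H1 u Hu Hb).
   + apply Hf; simpl; auto.
Qed.

Lemma R_and : forall G a b, IHm G (And a b) -> Gl G (And a b).
Proof. intros G a b IH.
 destruct (IH G a) as [H1|[t [Hm [Hf Hn]]]].
 - unfold mu. cbn [sumw wt]. pose proof (pow_lt1 (S (wt a)) (S (wt a + wt b + 2))). lia.
 - destruct (IH G b) as [H2|[t [Hm [Hf Hn]]]].
   + unfold mu. cbn [sumw wt]. pose proof (pow_lt1 (S (wt b)) (S (wt a + wt b + 2))). lia.
   + left. apply AndR; auto.
   + right. exists t. repeat split; auto. intros [_ H]; auto.
 - right. exists t. repeat split; auto. intros [H _]; auto.
Qed.

Lemma R_imp : forall G a b, IHm G (Imp a b) -> Gl G (Imp a b).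
Proof. intros G a b IH.
 destruct (IH (a :: G) b) as [H1|[t [Hm [Hf Hn]]]].
 - unfold mu. cbn [sumw wt]. pose proof (pow_lt2 (wt a) (S (wt b)) (S (wt a + wt b + 1))). lia.
 - left. apply ImpR; auto.
 - right. exists t. repeat split; auto. intros A HA; apply Hf; simpl; auto.
   simpl. intros H. apply Hn. apply (H t (d_refl t)). apply Hf; simpl; auto.
Qed.

Lemma R_var : forall G n, In (Var n) G -> G4iSLt G (Var n).
Proof. intros. destruct (in_perm _ _ H) as [G0 HP]. eapply IdP; eauto. Qed.

Definition irr_ant (G : list form) (X : form) : Prop :=
  match X with
  | Var _ => True | Box _ => True
  | Imp (Var n) _ => ~ In (Var n) G
  | Imp Bot _ => True | Imp (Imp _ _) _ => True | Imp (Box _) _ => True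
  | _ => False end.

Definition irr_suc (G : list form) (c : form) : Prop :=
  match c with Var n => ~ In (Var n) G | Bot => True | Or _ _ => True | Box _ => True
  | _ => False end.

Lemma collect : forall (A B : Type) (P : A -> Prop) (I : B -> Prop) (Q : A -> B -> Prop) (l : list A),
  (forall x, In x l -> P x -> exists y, I y /\ Q x y) ->
  exists ys, (forall y, In y ys -> I y) /\ (forall x, In x l -> P x -> exists y, In y ys /\ Q x y).
Proof. induction l as [|a l IH]; intros H.
- exists []. split; intros; simpl in *; tauto.
- destruct IH as [ys [H1 H2]]. intros; apply H; simpl; auto.
  destruct (classic (P a)) as [Pa|nPa].
  + destruct (H a (or_introl eq_refl) Pa) as [y [Iy Qy]]. exists (y :: ys). split.
    intros y' [<-|Hy']; auto.
    intros x [<-|Hx] Px. exists y; simpl; auto. destruct (H2 x Hx Px) as [y' [? ?]]. exists y'; simpl; auto.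
  + exists ys. split; auto. intros x [<-|Hx] Px. contradiction. auto.
Qed.

Lemma desc_root : forall l ks u, desc (Node l ks) u ->
  u = Node l ks \/ exists b c, In (b, c) ks /\ desc c u.
Proof. intros. inversion H; subst; auto. right. destruct H0 as [b Hb]. exists b, c; auto. Qed.

Lemma Rel_root : forall l ks v, Rel (Node l ks) v ->
  (exists c, In (true, c) ks /\ desc c v) \/ (exists b c, In (b, c) ks /\ Rel c v).
Proof. intros. inversion H; subst. left; exists c; auto. right; exists b, c; auto. Qed.

Definition rel (X : form) : Prop :=
  match X with Imp (Imp _ _) _ => True | Imp (Box _) _ => True | _ => False end.
Definition Qf (X : form) (k : bool * tree) : Prop :=
  match X with
  | Imp (Imp a b) _ => force (snd k) a /\ ~ force (snd k) b
  | Imp (Box a) _ => fst k = true /\ ~ force (snd k) a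
  | _ => True end.

Definition Inv (G : list form) (k : bool * tree) : Prop :=
  Mono (snd k) /\ (forall X, In X G -> ~ is_boxed X -> force (snd k) X) /\
  (forall A, In (Box A) G -> force (snd k) (if fst k then A else Box A)).
Definition SP (c : form) (ks : list (bool * tree)) : Prop :=
  match c with
  | Var _ => True | Bot => True
  | Or a b => (exists k, In k ks /\ ~ force (snd k) a) /\ (exists k, In k ks /\ ~ force (snd k) b)
  | Box a => exists t, In (true, t) ks /\ ~ force t a
  | _ => False end.

Lemma K1 (G : list form) (c : form) : IHm G c -> ~ G4iSLt G c -> ~ cm G c ->
  forall X, In X G -> rel X -> exists k, Inv G k /\ Qf X k.
Proof.
 intros IH HnG Hncm X HX Hrel.
 destruct X as [| | | |Y Z|]; try (destruct Hrel; fail). destruct Y as [| | | |a b|a]; try (destruct Hrel; fail).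
 - destruct (in_perm _ _ HX) as [G0 HP].
   destruct (IH (Z :: G0) c) as [H2|H2].
   { unfold mu. rewrite (sumw_perm _ _ HP). cbn [sumw wt].
     pose proof (pow_lt1 (wt Z) (wt a + wt b + 1 + wt Z + 1)). lia. }
   + destruct (IH (a :: Imp b Z :: G0) b) as [H1|H1].
     { unfold mu. rewrite (sumw_perm _ _ HP). cbn [sumw wt]. pose proof (wt_pos a).
       pose proof (pow_lt3 (wt a) (wt b + wt Z + 1) (S (wt b)) (wt a + wt b + 1 + wt Z + 1)). lia. }
     * exfalso. apply HnG. eapply ImpImpL; eauto. apply ImpR; auto.
     * destruct H1 as [t [Hm [Hf Hn]]]. exists (false, t). split; [split; [auto|split]|].
       -- intros Y HY HnB. apply (Permutation_in _ HP) in HY. destruct HY as [<-|HY].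
          ++ simpl. intros u Hu Hab.
             assert (Ha : force u a) by (apply (persist a t u); auto; apply Hf; simpl; auto).
             assert (Hb : force u b) by (apply (Hab u (d_refl u) Ha)).
             assert (H3 := Hf (Imp b Z) (or_intror (or_introl eq_refl))). simpl in H3.
             apply (H3 u Hu Hb).
          ++ apply Hf; simpl; auto.
       -- intros A HA. apply (Permutation_in _ HP) in HA. destruct HA as [HA|HA]. discriminate.
          apply Hf; simpl; auto.
       -- simpl. split; auto. apply Hf; simpl; auto.
   + exfalso. apply Hncm. destruct H2 as [t [Hm [Hf Hn]]]. exists t. split; auto. split; auto.
     intros Y HY. apply (Permutation_in _ HP) in HY. destruct HY as [<-|HY].
     * simpl. intros u Hu _. apply (persist Z t u); auto. apply Hf; simpl; auto.
     * apply Hf; simpl; auto.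
 - destruct (in_perm _ _ HX) as [G0 HP].
   assert (HP2 : Permutation G (nb G0 ++ map Box (ub G0) ++ [Imp (Box a) Z])).
   { eapply Permutation_trans. apply HP. rewrite app_assoc.
     eapply Permutation_trans. apply Permutation_cons_append. apply Permutation_app_tail.
     apply nb_perm. }
   assert (Hs := sumw_split G0). assert (Hsb := sumw_box (ub G0)).
   destruct (IH (nb G0 ++ map Box (ub G0) ++ [Z]) c) as [H2|H2].
   { unfold mu. rewrite (sumw_perm _ _ HP). rewrite !sumw_app. cbn [sumw wt].
     pose proof (pow_lt1 (wt Z) (wt a + 1 + wt Z + 1)). lia. }
   + destruct (IH (nb G0 ++ ub G0 ++ [Z; Box a]) a) as [H1|H1].
     { unfold mu. rewrite (sumw_perm _ _ HP). rewrite !sumw_app. cbn [sumw wt].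
       pose proof (wt_pos Z).
       pose proof (pow_lt3 (wt Z) (wt a + 1) (S (wt a)) (wt a + 1 + wt Z + 1)). lia. }
     * exfalso. apply HnG. eapply BoxImpL; eauto. apply nb_no_boxed.
     * destruct H1 as [t [Hm [Hf Hn]]]. exists (true, t). split; [split; [auto|split]|].
       -- intros Y HY HnB. apply (Permutation_in _ HP) in HY. destruct HY as [<-|HY].
          ++ simpl. intros u Hu _. apply (persist Z t u); auto. apply Hf.
             apply in_app_iff; right; apply in_app_iff; right; simpl; auto.
          ++ apply Hf. apply in_app_iff; left. apply in_nb; auto.
       -- intros A HA. apply (Permutation_in _ HP) in HA. destruct HA as [HA|HA]. discriminate.
          apply Hf. apply in_app_iff; right; apply in_app_iff; left. apply in_ub; auto.
       -- simpl. split; auto.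
   + exfalso. apply Hncm. destruct H2 as [t [Hm [Hf Hn]]]. exists t. split; auto. split; auto.
     intros Y HY. apply (Permutation_in _ HP2) in HY.
     apply in_app_iff in HY. destruct HY as [HY|HY]. apply Hf, in_app_iff; auto.
     apply in_app_iff in HY. destruct HY as [HY|[<-|[]]].
     apply Hf, in_app_iff; right; apply in_app_iff; auto.
     simpl. intros u Hu _. apply (persist Z t u); auto. apply Hf.
     apply in_app_iff; right; apply in_app_iff; right; simpl; auto.
Qed.

Lemma K2 (G : list form) (c : form) : IHm G c -> ~ G4iSLt G c -> irr_suc G c ->
  exists ks, (forall k, In k ks -> Inv G k) /\ SP c ks.
Proof.
 intros IH HnG Hirr. unfold SP. destruct c as [n| |a b|a b|a b|a]; try (destruct Hirr; fail).
 - exists []. split; auto. intros k [].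
 - exists []. split; auto. intros k [].
 - destruct (IH G a) as [H1|[ta [Hma [Hfa Hna]]]].
   { unfold mu. cbn [sumw wt]. pose proof (pow_lt1 (S (wt a)) (S (wt a + wt b + 1))). lia. }
   exfalso; apply HnG; apply OrR1; auto.
   destruct (IH G b) as [H1|[tb [Hmb [Hfb Hnb]]]].
   { unfold mu. cbn [sumw wt]. pose proof (pow_lt1 (S (wt b)) (S (wt a + wt b + 1))). lia. }
   exfalso; apply HnG; apply OrR2; auto.
   exists [(false, ta); (false, tb)]. split.
   + intros k [<-|[<-|[]]].
     * split; [auto|split]. intros X HX _; auto. intros A HA; apply (Hfa (Box A) HA).
     * split; [auto|split]. intros X HX _; auto. intros A HA; apply (Hfb (Box A) HA).
   + split. exists (false, ta); simpl; auto. exists (false, tb); simpl; auto.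
 - assert (HP := nb_perm G). assert (Hs := sumw_split G). assert (Hsb := sumw_box (ub G)).
   destruct (IH (nb G ++ ub G ++ [Box a]) a) as [H1|[t [Hm [Hf Hn]]]].
   { unfold mu. rewrite !sumw_app. cbn [sumw wt].
     pose proof (pow_lt2 (wt a + 1) (S (wt a)) (S (wt a + 1))). lia. }
   + exfalso. apply HnG. eapply SLtR; eauto. apply nb_no_boxed.
   + exists [(true, t)]. split.
     * intros k [<-|[]]. split; [auto|split]; simpl.
       intros X HX HnB. apply Hf, in_app_iff; left; apply in_nb; auto.
       intros A HA. apply Hf, in_app_iff; right; apply in_app_iff; left; apply in_ub; auto.
     * exists t; simpl; auto.
Qed.

Lemma irr_case (G : list form) (c : form) : IHm G c -> (forall X, In X G -> irr_ant G X) -> irr_suc G c -> Gl G c.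
Proof.
 intros IH HirrA HirrS.
 destruct (classic (G4iSLt G c)) as [H|HnG]; [left; auto|right].
 destruct (classic (cm G c)) as [H|Hncm]; [auto|].
 destruct (collect _ _ rel (Inv G) Qf G (K1 G c IH HnG Hncm)) as [ks1 [HI1 HQ1]].
 destruct (K2 G c IH HnG HirrS) as [ks2 [HI2 HS2]].
 set (ks := ks1 ++ ks2).
 assert (HI : forall k, In k ks -> Inv G k).
 { intros k Hk. apply in_app_iff in Hk. destruct Hk; auto. }
 set (root := Node (vars G) ks).
 assert (Hch : forall b t, In (b, t) ks -> desc root t).
 { intros b t Hin. apply d_step with t. exists b; auto. constructor. }
 assert (HM : Mono root).
 { intros u c0 Hu Hc n Hn. destruct (desc_root _ _ _ Hu) as [->|[b [c1 [Hin Hd]]]].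
   - destruct Hc as [b Hb]. destruct (HI _ Hb) as [_ [Hf _]].
     apply (Hf (Var n)). apply vars_iff; auto. simpl; auto.
   - destruct (HI _ Hin) as [Hm _]. apply (Hm u c0 Hd Hc n Hn). }
 assert (Himp : forall Y Z, In (Imp Y Z) G -> (force root Y -> force root Z) -> force root (Imp Y Z)).
 { intros Y Z HX HYZ. simpl. intros u Hu HY.
   destruct (desc_root _ _ _ Hu) as [Heq|[b [c1 [Hin Hd]]]].
   - rewrite Heq in *. auto.
   - destruct (HI _ Hin) as [Hm [Hf _]].
     assert (H1 := Hf (Imp Y Z) HX (fun x => x)). apply (persist _ _ _ Hm Hd) in H1.
     simpl in H1. apply (H1 u (d_refl u) HY). }
 exists root. split; auto. split.
 - intros X HX. assert (Hirr := HirrA X HX).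
   destruct X as [n| |a b|a b|Y Z|A]; try (destruct Hirr; fail).
   + simpl. apply vars_iff; auto.
   + apply Himp; auto. destruct Y as [n| |a b|a b|a b|a]; try (destruct Hirr; fail).
     * simpl. intros Hn. exfalso. apply Hirr. apply vars_iff; auto.
     * simpl; tauto.
     * intros Hab. destruct (HQ1 _ HX I) as [[b0 t0] [Hin [Ha Hb]]].
       exfalso. apply Hb. simpl in Hab. apply (Hab t0). eapply Hch. apply in_app_iff; left; eauto. auto.
     * intros Hba. destruct (HQ1 _ HX I) as [[b0 t0] [Hin [Hb0 Ha]]]. simpl in Hb0; subst b0.
       exfalso. apply Ha. simpl in Hba. apply Hba. eapply Rmod. simpl. apply in_app_iff; left; eauto.
       constructor.
   + simpl. intros v Hv. destruct (Rel_root _ _ _ Hv) as [[c1 [Hin Hd]]|[b [c1 [Hin HR]]]].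
     * destruct (HI _ Hin) as [Hm [_ Hb]]. specialize (Hb A HX). simpl in Hb.
       apply (persist A c1 v); auto.
     * destruct (HI _ Hin) as [Hm [_ Hb]]. specialize (Hb A HX). simpl in Hb.
       destruct b; [apply force_CP in Hb; [apply (Hb v HR)|auto] | apply (Hb v HR)].
 - unfold SP in HS2. destruct c as [n| |a b|a b|a b|a]; try (destruct HirrS; fail); try (destruct HS2; fail).
   + simpl. intros Hn. apply HirrS. apply vars_iff; auto.
   + simpl; auto.
   + destruct HS2 as [[[b1 t1] [Hin1 Hn1]] [[b2 t2] [Hin2 Hn2]]].
     simpl. intros [Ha|Hb].
     apply Hn1. apply (persist a root t1); auto. eapply Hch. apply in_app_iff; right; eauto.
     apply Hn2. apply (persist b root t2); auto. eapply Hch. apply in_app_iff; right; eauto.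
   + destruct HS2 as [t [Hin Hn]]. simpl. intros H. apply Hn. apply H.
     eapply Rmod. simpl. apply in_app_iff; right; eauto. constructor.
Qed.

Lemma compl : forall G c, Gl G c.
Proof. intros G c. remember (mu G c) as m. revert G c Heqm.
 induction m as [m IHm'] using lt_wf_ind. intros G c Heq. subst m.
 assert (IH : IHm G c) by (intros G' c' Hlt; apply (IHm' _ Hlt G' c' eq_refl)).
 destruct (classic (exists X, In X G /\ ~ irr_ant G X)) as [[X [HX Hn]]|Hall].
 - destruct X as [n| |a b|a b|Y Z|a].
   + exfalso; apply Hn; simpl; auto.
   + left; apply L_bot; auto.
   + eapply L_and; eauto.
   + eapply L_or; eauto.
   + destruct Y as [n| |a b|a b|a b|a]; simpl in Hn.
     * apply NNPP in Hn. eapply L_pimp; eauto.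
     * exfalso; auto.
     * eapply L_andimp; eauto.
     * eapply L_orimp; eauto.
     * exfalso; auto.
     * exfalso; auto.
   + exfalso; apply Hn; simpl; auto.
 - assert (HA : forall X, In X G -> irr_ant G X).
   { intros X HX. apply NNPP. intro H. apply Hall. eauto. }
   destruct c as [n| |a b|a b|a b|a].
   + destruct (classic (In (Var n) G)). left; apply R_var; auto. apply irr_case; auto.
   + apply irr_case; simpl; auto.
   + apply R_and; auto.
   + apply irr_case; simpl; auto.
   + apply R_imp; auto.
   + apply irr_case; simpl; auto.
Qed.

Theorem mainTheorem2 : forall phi : form,
  iSLH empty_set phi <-> G4iSLt [] phi.
Proof.
 intros phi. split.
 - intros H. destruct (compl [] phi) as [G|[t [Hm [_ Hn]]]]; auto.
   exfalso. apply Hn. apply (H_sound _ _ H). intros x []. auto.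
 - intros H. apply G4_sound in H. eapply H_mono; [exact H|]. intros x [].
Qed.
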